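(* Let $T_1,T_2,\dots,T_{2^n}$ be any enumeration of all subsets of $N=\{1,\dots,n\}$ such that $T_i\subseteq T_j$ implies $i\le j$. Then every $q\in P_n$ can be written as $q=q_1q_2\cdots q_{2^n}$, where for each $j$, $q_j\in P_n$ is a (possibly empty, hence equal to $1$) product of monic commutators each of which has support exactly $T_j$.
   Context: $P_n$ denotes the pure braid group on $n$ strands, generated by elements $p_{a,b}$ for $1\le a<b\le n$ subject to the relations: (A) $p_{a,b}p_{a,c}p_{b,c}=p_{a,c}p_{b,c}p_{a,b}=p_{b,c}p_{a,b}p_{a,c}$ for $1\le a<b<c\le n$; (B) $p_{a,b}p_{c,d}=p_{c,d}p_{a,b}$ and $p_{a,d}p_{b,c}=p_{b,c}p_{a,d}$ for $1\le a<b<c<d\le n$; (C) $p_{a,c}p_{b,c}^{-1}p_{b,d}p_{b,c}=p_{b,c}^{-1}p_{b,d}p_{b,c}p_{a,c}$ for $1\le a<b<c<d\le n$. For $S\subseteq N$, $P_S$ is the subgroup generated by the $p_{a,b}$ with $a,b\in S$. Commutator convention: $[x,y]=x^{-1}y^{-1}xy$. Monic commutators are defined recursively: each $p_{a,b}$ and $p_{a,b}^{-1}$ ($1\le a<b\le n$) is a monic commutator; if $x,y$ are monic commutators and $[x,y]\neq1$, then $[x,y]$ is a monic commutator. The support $\sigma(x)$ of $x\in P_n$ is the intersection of all $S\subseteq N$ such that $x\in P_S$. *)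

(* Defs.v *)
(* The pure braid group P_n is given by the presentation in the
   paper: elements are words in the letters p_{a,b}^{±1}, modulo the smallest
   congruence containing free cancellation and the relations (A),(B),(C).
   Strand indices 1..n are represented by 'I_n (0-based). *)
From mathcomp Require Import all_boot.
Set Implicit Arguments. Unset Strict Implicit. Unset Printing Implicit Defensive.

Section PureBraid.
Variable n : nat.

(* a letter (a, b, s) stands for p_{a,b} if s = true, p_{a,b}^{-1} if s = false *)
Definition letter := ('I_n * 'I_n * bool)%type.
Definition word := seq letter.

Definition linv (x : letter) : letter := (x.1.1, x.1.2, ~~ x.2).
Definition winv (w : word) : word := rev (map linv w).

Definition pw (a b : 'I_n) : word := [:: (a, b, true)].
Definition pwi (a b : 'I_n) : word := [:: (a, b, false)].

Definition valid_letter (x : letter) : bool := (x.1.1 < x.1.2)%N.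
Definition valid_word (w : word) : bool := all valid_letter w.

Inductive pb_eq : word -> word -> Prop :=
| pb_refl w : pb_eq w w
| pb_sym u v : pb_eq u v -> pb_eq v u
| pb_trans u v w : pb_eq u v -> pb_eq v w -> pb_eq u w
| pb_cat u u' v v' : pb_eq u u' -> pb_eq v v' -> pb_eq (u ++ v) (u' ++ v')
| pb_cancel x : pb_eq [:: x; linv x] [::]
| pb_relA1 (a b c : 'I_n) : (a < b < c)%N ->
    pb_eq (pw a b ++ pw a c ++ pw b c) (pw a c ++ pw b c ++ pw a b)
| pb_relA2 (a b c : 'I_n) : (a < b < c)%N ->
    pb_eq (pw a c ++ pw b c ++ pw a b) (pw b c ++ pw a b ++ pw a c)
| pb_relB1 (a b c d : 'I_n) : [&& (a < b)%N, (b < c)%N & (c < d)%N] ->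
    pb_eq (pw a b ++ pw c d) (pw c d ++ pw a b)
| pb_relB2 (a b c d : 'I_n) : [&& (a < b)%N, (b < c)%N & (c < d)%N] ->
    pb_eq (pw a d ++ pw b c) (pw b c ++ pw a d)
| pb_relC (a b c d : 'I_n) : [&& (a < b)%N, (b < c)%N & (c < d)%N] ->
    pb_eq (pw a c ++ pwi b c ++ pw b d ++ pw b c)
          (pwi b c ++ pw b d ++ pw b c ++ pw a c).

Definition wcomm (x y : word) : word := winv x ++ winv y ++ x ++ y.

Inductive ctree : Type :=
| CLeaf of 'I_n & 'I_n & bool
| CNode of ctree & ctree.

Fixpoint ceval (t : ctree) : word :=
  match t with
  | CLeaf a b s => [:: (a, b, s)]
  | CNode x y => wcomm (ceval x) (ceval y)
  end.

Fixpoint monic_comm (t : ctree) : Prop :=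
  match t with
  | CLeaf a b _ => (a < b)%N
  | CNode x y => monic_comm x /\ monic_comm y /\ ~ pb_eq (ceval t) [::]
  end.

Definition in_PS (S : {set 'I_n}) (w : word) : Prop :=
  exists w', pb_eq w w' /\ valid_word w' /\
             all (fun x : letter => (x.1.1 \in S) && (x.1.2 \in S)) w'.

(* sigma(w) = T, sigma(w) being the intersection of all S with w in P_S *)
Definition support_is (w : word) (T : {set 'I_n}) : Prop :=
  forall i : 'I_n, (forall S, in_PS S w -> i \in S) <-> i \in T.

End PureBraid.

Fixpoint all_prop {T : Type} (P : T -> Prop) (s : seq T) : Prop :=
  match s with
  | [::] => True
  | x :: s' => P x /\ all_prop P s'
  end.

(* Main.v *)
Require Import Defs.
From mathcomp Require Import all_boot zify.
From Stdlib Require Import Classical_Prop.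
Set Implicit Arguments. Unset Strict Implicit. Unset Printing Implicit Defensive.

Section Basics.
Variable n : nat.
Implicit Types (u v w : word n) (c : ctree n).

Lemma pb_catl u v v' : pb_eq v v' -> pb_eq (u ++ v) (u ++ v').
Proof. by move=> h; apply: pb_cat (pb_refl _) h. Qed.
Lemma pb_catr u u' v : pb_eq u u' -> pb_eq (u ++ v) (u' ++ v).
Proof. by move=> h; apply: pb_cat h (pb_refl _). Qed.

Lemma linvK (x : letter n) : linv (linv x) = x.
Proof. by case: x => [[a b] s]; rewrite /linv /= negbK. Qed.

Lemma winvK w : winv (winv w) = w.
Proof.
rewrite /winv map_rev revK -map_comp.
by rewrite (eq_map (g := id)) ?map_id // => x /=; rewrite linvK.
Qed.

Lemma winv_cat u v : winv (u ++ v) = winv v ++ winv u.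
Proof. by rewrite /winv map_cat rev_cat. Qed.

Lemma inv_r u : pb_eq (u ++ winv u) [::].
Proof.
elim: u => [|a u IH] //=; first exact: pb_refl.
have -> : a :: u ++ winv (a :: u) = [:: a] ++ (u ++ winv u) ++ [:: linv a].
  by rewrite /winv /= rev_cons -cats1 /= -catA.
apply: pb_trans (pb_catl _ (pb_catr _ IH)) _ => /=.
exact: pb_cancel.
Qed.

Lemma inv_l u : pb_eq (winv u ++ u) [::].
Proof. by have := inv_r (winv u); rewrite winvK. Qed.

Lemma winv_nil u : pb_eq u [::] -> pb_eq (winv u) [::].
Proof.
move=> h; rewrite -[winv u]cats0.
apply: pb_trans (pb_catl _ (pb_sym h)) _; exact: inv_l.
Qed.

Lemma swap_eq u v : pb_eq (v ++ u) (u ++ v ++ wcomm v u).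
Proof.
apply: pb_sym; rewrite /wcomm.
have -> : u ++ v ++ winv v ++ winv u ++ v ++ u = u ++ ((v ++ winv v) ++ (winv u ++ (v ++ u))) by rewrite !catA.
apply: pb_trans (pb_catl _ (pb_catr _ (inv_r v))) _ => /=.
rewrite catA; apply: pb_trans (pb_catr _ (inv_r u)) _; exact: pb_refl.
Qed.

Definition prod (s : seq (ctree n)) : word n := flatten (map (@ceval n) s).
Lemma prod_cat s t : prod (s ++ t) = prod s ++ prod t.
Proof. by rewrite /prod map_cat flatten_cat. Qed.

Definition del (i : 'I_n) w : word n :=
  filter (fun x : letter n => (x.1.1 != i) && (x.1.2 != i)) w.

Lemma del_cat i u v : del i (u ++ v) = del i u ++ del i v.
Proof. exact: filter_cat. Qed.

Lemma del_winv i w : del i (winv w) = winv (del i w).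
Proof.
rewrite /del /winv filter_rev filter_map; congr rev; congr map.
Qed.

Lemma del_eq i u v : pb_eq u v -> pb_eq (del i u) (del i v).
Proof.
elim=> {u v}.
- move=> w; exact: pb_refl.
- move=> u v _ h; exact: pb_sym h.
- move=> u v w _ h1 _ h2; exact: pb_trans h1 h2.
- move=> u u' v v' _ h1 _ h2; rewrite !del_cat; exact: pb_cat h1 h2.
- move=> [[a b] s]; rewrite /del /linv /=; case: ((a != i) && (b != i)).
    exact: (pb_cancel (a, b, s)).
  exact: pb_refl.
- move=> a b c /andP[h1 h2]; rewrite /del /=.
  case: (eqVneq a i) => Ha; case: (eqVneq b i) => Hb; case: (eqVneq c i) => Hc;
    rewrite /=; try (subst; exfalso; lia); try exact: pb_refl.
  by apply: pb_relA1; rewrite h1 h2.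
- move=> a b c /andP[h1 h2]; rewrite /del /=.
  case: (eqVneq a i) => Ha; case: (eqVneq b i) => Hb; case: (eqVneq c i) => Hc;
    rewrite /=; try (subst; exfalso; lia); try exact: pb_refl.
  by apply: pb_relA2; rewrite h1 h2.
- move=> a b c d /and3P[h1 h2 h3]; rewrite /del /=.
  case: (eqVneq a i) => Ha; case: (eqVneq b i) => Hb; case: (eqVneq c i) => Hc;
    case: (eqVneq d i) => Hd;
    rewrite /=; try (subst; exfalso; lia); try exact: pb_refl.
  by apply: pb_relB1; rewrite h1 h2 h3.
- move=> a b c d /and3P[h1 h2 h3]; rewrite /del /=.
  case: (eqVneq a i) => Ha; case: (eqVneq b i) => Hb; case: (eqVneq c i) => Hc;
    case: (eqVneq d i) => Hd;
    rewrite /=; try (subst; exfalso; lia); try exact: pb_refl.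
  by apply: pb_relB2; rewrite h1 h2 h3.
- move=> a b c d /and3P[h1 h2 h3]; rewrite /del /=.
  case: (eqVneq a i) => Ha; case: (eqVneq b i) => Hb; case: (eqVneq c i) => Hc;
    case: (eqVneq d i) => Hd;
    rewrite /=; try (subst; exfalso; lia); try exact: pb_refl.
  + apply: (pb_trans (v := [:: (a, c, true)])).
      have := pb_catl [:: (a, c, true)] (pb_cancel (b, c, false)).
      by rewrite cats0.
    apply: pb_sym.
    exact: (pb_catr [:: (a, c, true)] (pb_cancel (b, c, false))).
  + by apply: pb_relC; rewrite h1 h2 h3.
Qed.
End Basics.

Section Support.
Variable n : nat.
Implicit Types (u v w : word n) (c : ctree n).

Fixpoint L c : {set 'I_n} :=
  match c with
  | CLeaf a b _ => [set a; b]
  | CNode x y => L x :|: L y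
  end.

Definition inS (A : {set 'I_n}) (x : letter n) := (x.1.1 \in A) && (x.1.2 \in A).

Lemma all_winv (P : pred (letter n)) w :
  (forall x, P (linv x) = P x) -> all P (winv w) = all P w.
Proof. by move=> h; rewrite /winv all_rev all_map; apply: eq_all => x /=; rewrite h. Qed.

Lemma all_sub (A B : {set 'I_n}) w : A \subset B -> all (inS A) w -> all (inS B) w.
Proof.
move=> sAB; apply: sub_all => x /andP[h1 h2]; apply/andP; split; exact: (subsetP sAB).
Qed.

Lemma letters c : all (inS (L c)) (ceval c).
Proof.
elim: c => [a b s|x IHx y IHy] /=.
  by rewrite /inS /= set21 set22.
rewrite /wcomm !all_cat !all_winv // ?andbb.
have hx := all_sub (subsetUl (L x) (L y)) IHx.
have hy := all_sub (subsetUr (L x) (L y)) IHy.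
by rewrite hx hy.
Qed.

Lemma valid_ceval c : monic_comm c -> valid_word (ceval c).
Proof.
elim: c => [a b s|x IHx y IHy] /=; first by rewrite /valid_word /= andbT.
move=> [hx [hy _]]; rewrite /valid_word /wcomm !all_cat !all_winv //.
by have := IHx hx; have := IHy hy; rewrite /valid_word => -> ->.
Qed.

Definition par (a b : 'I_n) w := odd (count (fun x : letter n => x.1 == (a, b)) w).

Lemma par_eq a b u v : pb_eq u v -> par a b u = par a b v.
Proof.
elim=> {u v} //.
- by move=> u v w _ -> _ ->.
- by move=> u u' v v' _ h1 _ h2; move: h1 h2; rewrite /par !count_cat !oddD => -> ->.
- by move=> [[c d] s]; rewrite /par /=; case: ((c, d) == (a, b)).
- by move=> x y z _; rewrite /par /=; congr odd; lia.
- by move=> x y z _; rewrite /par /=; congr odd; lia.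
- by move=> x y z t _; rewrite /par /=; congr odd; lia.
- by move=> x y z t _; rewrite /par /=; congr odd; lia.
- by move=> x y z t _; rewrite /par /=; congr odd; lia.
Qed.

Lemma brunn c i : i \in L c -> pb_eq (del i (ceval c)) [::].
Proof.
elim: c => [a b s|x IHx y IHy] /=.
  by case/set2P => ->; rewrite /del /= eqxx /= ?andbF; apply: pb_refl.
rewrite /wcomm !del_cat !del_winv; case/setUP => hi.
  apply: pb_trans (pb_cat (winv_nil (IHx hi)) (pb_catl _ (pb_cat (IHx hi) (pb_refl _)))) _.
  exact: inv_l.
apply: pb_trans (pb_catl _ (pb_cat (winv_nil (IHy hi)) (pb_catl _ (IHy hi)))) _.
rewrite /= cats0; exact: inv_l.
Qed.

Lemma del_id i (S : {set 'I_n}) w : all (inS S) w -> i \notin S -> del i w = w.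
Proof.
move=> h hi; apply/all_filterP; apply: sub_all h => x /andP[h1 h2].
by apply/andP; split; apply: contraNneq hi => <-.
Qed.

Lemma support_L c : monic_comm c -> support_is (ceval c) (L c).
Proof.
move=> hm i; split.
  move=> H; apply: H; exists (ceval c); split; first exact: pb_refl.
  split; [exact: valid_ceval | exact: letters].
move=> hi S [w' [hw [hv hall]]]; apply/idPn => hiS.
have e1 : pb_eq w' (del i (ceval c)).
  by rewrite -{1}(del_id hall hiS); apply: del_eq; apply: pb_sym.
have e := pb_trans hw (pb_trans e1 (brunn hi)).
move: hm e; case: c {hi hw e1} => [a b s|x y] /=.
  by move=> _ e; have := par_eq a b e; rewrite /par /= eqxx.
by move=> [_ [_ h]] e; apply: h.
Qed.
End Support.

Lemma all_prop_cat {X : Type} (P : X -> Prop) s t :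
  all_prop P s -> all_prop P t -> all_prop P (s ++ t).
Proof. by elim: s => [|x s IH] //= [h1 h2] ht; split; [|apply: IH]. Qed.

Lemma all_prop_imp {X : Type} (P Q : X -> Prop) s :
  (forall x, P x -> Q x) -> all_prop P s -> all_prop Q s.
Proof. by move=> h; elim: s => [|x s IH] //= [h1 h2]; split; [apply: h|apply: IH]. Qed.

Section Collect.
Variables (n N : nat) (T : 'I_N -> {set 'I_n}) (g : {set 'I_n} -> 'I_N).
Hypothesis hgT : cancel g T.
Hypothesis hmono : forall i j : 'I_N, T i \subset T j -> (i <= j)%N.

Definition idx (c : ctree n) : nat := val (g (L c)).

Definition Gx m c := monic_comm c /\ idx c = m.
Definition Gz m c := monic_comm c /\ (m < idx c)%N.

Lemma idx_node x y : (idx x <= idx (CNode x y))%N.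
Proof. by apply: hmono; rewrite !hgT /= subsetUl. Qed.

Lemma swap1 m z x : Gz m z -> Gx m x ->
  exists W, all_prop (Gz m) W /\
    pb_eq (ceval z ++ ceval x) (ceval x ++ ceval z ++ prod W).
Proof.
move=> [hz iz] [hx ix].
case: (Classical_Prop.classic (pb_eq (wcomm (ceval z) (ceval x)) [::])) => h.
  exists [::]; split => //; rewrite /prod /= cats0.
  apply: pb_trans (swap_eq _ _) _; apply: pb_catl; apply: pb_trans (pb_catl _ h) _.
  rewrite cats0; exact: pb_refl.
exists [:: CNode z x]; split.
  split => //; split; first by [].
  by apply: leq_trans iz (idx_node z x).
rewrite /prod /= cats0; exact: swap_eq.
Qed.

Lemma move1 m x Z : all_prop (Gz m) Z -> Gx m x ->
  exists Z', all_prop (Gz m) Z' /\ pb_eq (prod Z ++ ceval x) (ceval x ++ prod Z').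
Proof.
move=> + hx; elim: Z => [|z Z IH] /=.
  by move=> _; exists [::]; split => //; rewrite cats0; apply: pb_refl.
move=> [hz hZ]; have [Z1 [h1 e1]] := IH hZ.
have [W [hW eW]] := swap1 hz hx.
exists (z :: W ++ Z1); split.
  by split => //; apply: all_prop_cat.
rewrite (_ : prod (z :: Z) = ceval z ++ prod Z) // (_ : prod (z :: W ++ Z1) = ceval z ++ prod (W ++ Z1)) // -catA.
apply: pb_trans (pb_catl _ e1) _; rewrite catA.
apply: pb_trans (pb_catr _ eW) _.
rewrite prod_cat !catA; exact: pb_refl.
Qed.

Lemma move2 m X : all_prop (Gx m) X -> forall Z, all_prop (Gz m) Z ->
  exists Z', all_prop (Gz m) Z' /\ pb_eq (prod Z ++ prod X) (prod X ++ prod Z').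
Proof.
elim: X => [|x X IH] /=.
  by move=> _ Z hZ; exists Z; split => //; rewrite cats0; apply: pb_refl.
move=> [hx hX] Z hZ; have [Z1 [h1 e1]] := move1 hZ hx.
have [Z' [h' e']] := IH hX Z1 h1.
exists Z'; split => //.
rewrite /prod /= -/(prod X) catA.
apply: pb_trans (pb_catr _ e1) _; rewrite -catA.
apply: pb_trans (pb_catl _ e') _; rewrite catA; exact: pb_refl.
Qed.

Lemma split_list m s : all_prop (fun c => monic_comm c /\ (m <= idx c)%N) s ->
  exists X Y, all_prop (Gx m) X /\ all_prop (Gz m) Y /\
    pb_eq (prod s) (prod X ++ prod Y).
Proof.
elim: s => [|y s IH] /=.
  by move=> _; exists [::], [::]; split => //; split => //; apply: pb_refl.
move=> [[hy my] hs]; have [X [Y [hX [hY e]]]] := IH hs.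
case: (ltnP m (idx y)) => my'.
  have [Z' [hZ eZ]] := move2 hX (Z := [:: y]) (conj (conj hy my') I).
  exists X, (Z' ++ Y); split => //; split; first exact: all_prop_cat.
  rewrite (_ : prod (y :: s) = ceval y ++ prod s) //.
  apply: pb_trans (pb_catl _ e) _; rewrite catA.
  have h : pb_eq ((ceval y ++ prod X) ++ prod Y) ((prod X ++ prod Z') ++ prod Y).
    by have := pb_catr (prod Y) eZ; rewrite /prod /= cats0.
  apply: pb_trans h _; rewrite prod_cat catA; exact: pb_refl.
exists (y :: X), Y; split.
  by split => //; split => //; apply/eqP; rewrite eqn_leq my my'.
split => //; rewrite (_ : prod (y :: s) = ceval y ++ prod s) // (_ : prod (y :: X) = ceval y ++ prod X) // -catA; exact: pb_catl.
Qed.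

Lemma collect k : forall m s, (N - m <= k)%N ->
  all_prop (fun c => monic_comm c /\ (m <= idx c)%N) s ->
  exists csn : nat -> seq (ctree n),
    (forall j, all_prop (fun c => monic_comm c /\ idx c = j) (csn j)) /\
    pb_eq (prod s) (flatten [seq prod (csn j) | j <- iota m (N - m)]).
Proof.
elim: k => [|k IH] m s hk hs.
  have hm : (N <= m)%N by lia.
  case: s hs => [|c s] /=.
    move=> _; exists (fun _ => [::]); split => // ; rewrite (_ : N - m = 0) /=; [exact: pb_refl| lia].
  move=> [[_ hc] _]; have := ltn_ord (g (L c)); rewrite -/(idx c); lia.
case: (leqP N m) => hm.
  apply: (IH m s) => //; lia.
have [X [Y [hX [hY e]]]] := split_list hs.
have [csn [hc ec]] := IH m.+1 Y ltac:(lia) (all_prop_imp (P := Gz m) (fun c h => h) hY).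
exists (fun j => if j == m then X else csn j); split.
  move=> j; case: eqP => [->|_] //.
rewrite -(subnSK hm) /= eqxx.
apply: pb_trans e (pb_catl _ _).
have -> : [seq prod (if j == m then X else csn j) | j <- iota m.+1 (N - m.+1)]
  = [seq prod (csn j) | j <- iota m.+1 (N - m.+1)]; last exact: ec.
apply/eq_in_map => j; rewrite mem_iota => /andP[h1 _].
by rewrite (_ : (j == m) = false) //; apply/eqP; lia.
Qed.
End Collect.

Theorem mainTheorem10 (n : nat) (T : 'I_(2 ^ n) -> {set 'I_n})
  (hT : bijective T)
  (hmono : forall i j : 'I_(2 ^ n), T i \subset T j -> (i <= j)%N)
  (q : word n) (hq : valid_word q) :
  exists cs : 'I_(2 ^ n) -> seq (ctree n),
    (forall j, all_prop (fun c => monic_comm c /\ support_is (ceval c) (T j)) (cs j)) /\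
    pb_eq q (flatten [seq flatten (map (@ceval n) (cs j)) | j <- enum 'I_(2 ^ n)]).
Proof.
case: hT => g hTg hgT.
pose s := map (fun x : letter n => CLeaf x.1.1 x.1.2 x.2) q.
have ps : prod s = q.
  rewrite /s /prod; elim: q {hq s} => [|[[a b] t] q IH] //=; by rewrite IH.
have hs : all_prop (fun c => monic_comm c /\ (0 <= idx g c)%N) s.
  rewrite /s; elim: q hq {ps s} => [|x q IH] //= /andP[h1 h2]; split; last exact: IH.
  by split.
have [csn [hc ec]] := collect hgT hmono (leqnn (2 ^ n - 0)) hs.
exists (fun j => csn (val j)); split.
  move=> j; apply: all_prop_imp (hc (val j)) => c [h1 h2]; split => //.
  have -> : T j = L c.
    have -> : j = g (L c) by apply: val_inj; rewrite -h2.
    by rewrite hgT.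
  exact: support_L.
have -> : [seq flatten (map (@ceval n) (csn (val j))) | j <- enum 'I_(2 ^ n)]
        = [seq prod (csn k) | k <- iota 0 (2 ^ n - 0)].
  by rewrite subn0 -val_enum_ord -map_comp.
by rewrite -ps.
Qed.
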